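(* Let $n\ge 2$ and let $k_1,\dots,k_n$ be positive integers with $\sum_{i=1}^n \frac{1}{k_i}=1$. Let $k=\operatorname{lcm}(k_1,\dots,k_n)$ and $w_i=k/k_i$ (so $\sum_i w_i=k$). Then for every real $x\in[\frac1k,1)$, $$\lfloor kx\rfloor-\sum_{i=1}^n\lfloor w_i x\rfloor\ \ge\ 1 .$$
   Context: $\lfloor y\rfloor$ denotes the integer part (floor) of a real number $y$. *)

(* Defs.v *)
From Stdlib Require Import Reals ZArith Arith Lia Lra.
Open Scope R_scope.

(* floor of a real: Int_part r = up r - 1 is the greatest integer <= r *)
Definition floorR (y : R) : Z := Int_part y.

Fixpoint lcm_upto (k : nat -> nat) (n : nat) : nat :=
  match n with
  | O => 1%nat
  | S m => Nat.lcm (lcm_upto k m) (k m)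
  end.

Fixpoint zsum_upto (f : nat -> Z) (n : nat) : Z :=
  match n with
  | O => 0%Z
  | S m => (zsum_upto f m + f m)%Z
  end.

Fixpoint rsum_upto (f : nat -> R) (n : nat) : R :=
  match n with
  | O => 0
  | S m => rsum_upto f m + f m
  end.

(* Main.v *)
Require Import Defs.
From Stdlib Require Import Reals ZArith Arith Lia Lra Classical.
Open Scope R_scope.

Lemma floor_char (y : R) (z : Z) : IZR z <= y -> y < IZR z + 1 -> floorR y = z.
Proof.
  intros H1 H2. unfold floorR, Int_part.
  assert (z + 1 = up y)%Z.
  { apply tech_up; rewrite plus_IZR; lra. }
  lia.
Qed.

Lemma floorR_le (y : R) : IZR (floorR y) <= y.
Proof.
  unfold floorR, Int_part. destruct (archimed y) as [H1 H2].
  rewrite minus_IZR. lra.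
Qed.

Lemma floorR_gt (y : R) : y < IZR (floorR y) + 1.
Proof.
  unfold floorR, Int_part. destruct (archimed y) as [H1 H2].
  rewrite minus_IZR. lra.
Qed.

Lemma zsum_ext (f g : nat -> Z) n : (forall i, (i < n)%nat -> f i = g i) ->
  zsum_upto f n = zsum_upto g n.
Proof.
  induction n; simpl; intros H; auto.
  rewrite IHn by (intros; apply H; lia). rewrite H by lia. reflexivity.
Qed.

Lemma zsum_IZR (f : nat -> Z) n : IZR (zsum_upto f n) = rsum_upto (fun i => IZR (f i)) n.
Proof. induction n; simpl; auto. rewrite plus_IZR, IHn. reflexivity. Qed.

Lemma rsum_scal c (f : nat -> R) n : rsum_upto (fun i => c * f i) n = c * rsum_upto f n.
Proof. induction n; simpl. ring. rewrite IHn. ring. Qed.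

Lemma rsum_lt (f g : nat -> R) n : (forall i, (i < n)%nat -> f i <= g i) ->
  (exists j, (j < n)%nat /\ f j < g j) -> rsum_upto f n < rsum_upto g n.
Proof.
  induction n; simpl; intros H [j [Hj Hlt]]. lia.
  assert (Hle : forall m, (m <= n)%nat -> rsum_upto f m <= rsum_upto g m).
  { induction m; simpl; intros. lra. assert (f m <= g m) by (apply H; lia).
    specialize (IHm ltac:(lia)). lra. }
  destruct (Nat.eq_dec j n) as [->|Hne].
  - specialize (Hle n (le_n _)). lra.
  - assert (rsum_upto f n < rsum_upto g n).
    { apply IHn. intros; apply H; lia. exists j; split; [lia|auto]. }
    assert (f n <= g n) by (apply H; lia). lra.
Qed.

Lemma lcm_div (k : nat -> nat) n i : (i < n)%nat -> Nat.divide (k i) (lcm_upto k n).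
Proof.
  induction n; simpl; intros H. lia.
  destruct (Nat.eq_dec i n) as [->|Hne].
  - apply Nat.divide_lcm_r.
  - eapply Nat.divide_trans. apply IHn; lia. apply Nat.divide_lcm_l.
Qed.

Lemma lcm_least_all (k : nat -> nat) n m : (forall i, (i < n)%nat -> Nat.divide (k i) m) ->
  Nat.divide (lcm_upto k n) m.
Proof.
  induction n; simpl; intros H. apply Nat.divide_1_l.
  apply Nat.lcm_least. apply IHn; intros; apply H; lia. apply H; lia.
Qed.

Lemma lcm_pos (k : nat -> nat) n : (forall i, (i < n)%nat -> (0 < k i)%nat) -> (0 < lcm_upto k n)%nat.
Proof.
  induction n; simpl; intros H. lia.
  destruct (Nat.eq_dec (Nat.lcm (lcm_upto k n) (k n)) 0) as [E|E]; [|lia].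
  apply Nat.lcm_eq_0 in E. destruct E as [E|E].
  - assert (0 < lcm_upto k n)%nat by (apply IHn; intros; apply H; lia). lia.
  - specialize (H n ltac:(lia)). lia.
Qed.

Theorem mainTheorem2 (n : nat) (k : nat -> nat)
  (hn : (2 <= n)%nat)
  (hpos : forall i, (i < n)%nat -> (0 < k i)%nat)
  (hsum : rsum_upto (fun i => / INR (k i)) n = 1) :
  let K := lcm_upto k n in
  forall x : R, / INR K <= x -> x < 1 ->
  (floorR (INR K * x)
     - zsum_upto (fun i => floorR (INR (K / k i) * x)) n >= 1)%Z.
Proof.
  intros K x Hx1 Hx2.
  assert (HK : (0 < K)%nat) by (apply lcm_pos; auto).
  assert (HKr : 0 < INR K) by (apply lt_0_INR; auto).
  assert (HKx : 1 <= INR K * x).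
  { apply Rmult_le_compat_l with (r := INR K) in Hx1; [|lra].
    rewrite Rinv_r in Hx1; lra. }
  assert (HKx2 : INR K * x < INR K).
  { assert (INR K * x < INR K * 1) by (apply Rmult_lt_compat_l; lra). lra. }
  set (m := floorR (INR K * x)).
  assert (Hm1 := floorR_le (INR K * x)). assert (Hm2 := floorR_gt (INR K * x)).
  fold m in Hm1, Hm2.
  assert (Hm0 : (1 <= m)%Z).
  { assert (0 < IZR m) by lra. apply lt_IZR in H. lia. }
  set (mn := Z.to_nat m).
  assert (Em : m = Z.of_nat mn) by (unfold mn; lia).
  assert (Emr : IZR m = INR mn) by (rewrite Em, <- INR_IZR_INZ; reflexivity).
  rewrite Emr in Hm1, Hm2.
  assert (HmK : (mn < K)%nat).
  { apply INR_lt. lra. }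
  assert (Hfl : forall i, (i < n)%nat -> floorR (INR (K / k i) * x) = Z.of_nat (mn / k i)).
  { intros i Hi. pose proof (hpos i Hi) as Hk.
    destruct (lcm_div k n i Hi) as [c Hc]. fold K in Hc.
    assert (Ew : (K / k i = c)%nat) by (rewrite Hc; apply Nat.div_mul; lia).
    rewrite Ew. set (q := (mn / k i)%nat).
    assert (Hq1 : (k i * q <= mn)%nat) by (apply Nat.Div0.mul_div_le).
    assert (Hq2 : (mn < k i * (q + 1))%nat).
    { pose proof (Nat.div_mod mn (k i) ltac:(lia)).
      pose proof (Nat.mod_upper_bound mn (k i) ltac:(lia)). fold q in H. nia. }
    assert (Hq2' : (mn + 1 <= k i * (q + 1))%nat) by lia.
    assert (Hkr : 0 < INR (k i)) by (apply lt_0_INR; auto).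
    apply le_INR in Hq1. apply lt_INR in Hq2.
    rewrite mult_INR in Hq1, Hq2. rewrite plus_INR in Hq2. simpl INR in Hq2.
    assert (EK : INR K = INR c * INR (k i)) by (rewrite Hc, mult_INR; reflexivity).
    rewrite EK in Hm1, Hm2.
    apply floor_char; rewrite <- INR_IZR_INZ.
    - apply Rmult_le_reg_l with (INR (k i)); auto. nra.
    - apply Rmult_lt_reg_l with (INR (k i)); auto.
      assert (INR mn + 1 <= INR (k i) * (INR q + 1)).
      { apply le_INR in Hq2'. rewrite mult_INR, !plus_INR in Hq2'. simpl in Hq2'. lra. }
      nra. }
  rewrite (zsum_ext _ (fun i => Z.of_nat (mn / k i)) n Hfl).
  fold m. rewrite Em.
  assert (Hlt : IZR (zsum_upto (fun i => Z.of_nat (mn / k i)) n) < INR mn).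
  { rewrite zsum_IZR.
    replace (INR mn) with (rsum_upto (fun i => INR mn * / INR (k i)) n)
      by (rewrite rsum_scal, hsum; ring).
    apply rsum_lt.
    - intros i Hi. rewrite <- INR_IZR_INZ. pose proof (hpos i Hi).
      assert (Hkr : 0 < INR (k i)) by (apply lt_0_INR; auto).
      assert (H1 : (k i * (mn / k i) <= mn)%nat) by apply Nat.Div0.mul_div_le.
      apply le_INR in H1. rewrite mult_INR in H1.
      apply Rmult_le_reg_l with (INR (k i)); auto. field_simplify; lra.
    - apply NNPP. intro Hno.
      assert (Hd : Nat.divide K mn).
      { apply lcm_least_all. intros i Hi. apply NNPP. intro Hnd.
        apply Hno. exists i. split; auto. rewrite <- INR_IZR_INZ.
        pose proof (hpos i Hi).
        assert (Hkr : 0 < INR (k i)) by (apply lt_0_INR; auto).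
        pose proof (Nat.div_mod mn (k i) ltac:(lia)) as Hdm.
        assert (mn mod k i <> 0)%nat.
        { intro E. apply Hnd. exists (mn / k i)%nat. lia. }
        assert (H1 : (k i * (mn / k i) < mn)%nat) by lia.
        apply lt_INR in H1. rewrite mult_INR in H1.
        apply Rmult_lt_reg_l with (INR (k i)); auto. field_simplify; lra. }
      destruct Hd as [c Hc]. destruct c; lia. }
  rewrite INR_IZR_INZ in Hlt. apply lt_IZR in Hlt. lia.
Qed.
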